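(* Let $M$ be a matroid, $\psi\colon E(M)\to\Gamma$ a labeling to an abelian group, $F\subseteq\Gamma$ finite, and $\alpha$ a positive integer. If $M$ is $(\alpha,|F|+1)$-weakly base orderable and $M$ has at least one $F$-avoiding basis, then for every basis $B$ of $M$ there exists an $F$-avoiding basis $B^*$ with $|B\setminus B^*|\le\alpha-1$.
   Context: $\psi(S):=\sum_{x\in S}\psi(x)$; a basis $B$ is $F$-avoiding if $\psi(B)\notin F$. For a positive integer $k$, an ordered pair $(B_1,B_2)$ of bases has the $k$-exchange property if there exist pairwise disjoint nonempty $X_1,\dots,X_k\subseteq B_1\setminus B_2$ and pairwise disjoint nonempty $Y_1,\dots,Y_k\subseteq B_2\setminus B_1$ such that $(B_1\setminus\bigcup_{i\in Z}X_i)\cup\bigcup_{i\in Z}Y_i$ is a basis for every $Z\subseteq[k]$. A matroid is $(\alpha,k)$-weakly base orderable if every ordered pair $(B_1,B_2)$ of bases with $|B_1\setminus B_2|\ge\alpha$ has the $k$-exchange property. *)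

(* Defs.v *)
From HB Require Import structures.
From mathcomp Require Import all_boot all_order all_algebra.
Set Implicit Arguments. Unset Strict Implicit. Unset Printing Implicit Defensive.
Import GRing.Theory.

Record matroid (E : finType) := Matroid {
  is_base : {set E} -> bool;
  base_nonempty : exists B, is_base B;
  base_exchange : forall B1 B2 x, is_base B1 -> is_base B2 ->
    x \in B1 :\: B2 -> exists2 y, y \in B2 :\: B1 & is_base (y |: (B1 :\ x))
}.

Definition psi_sum (E : finType) (G : zmodType) (psi : E -> G) (S : {set E}) : G :=
  (\sum_(x in S) psi x)%R.

Definition F_avoiding (E : finType) (G : zmodType) (psi : E -> G) (F : seq G)
  (B : {set E}) : Prop := psi_sum psi B \notin F.

Definition k_exchange (E : finType) (M : matroid E) (k : nat)
  (B1 B2 : {set E}) : Prop :=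
  exists (X Y : 'I_k -> {set E}),
    [/\ forall i, X i != set0 /\ X i \subset B1 :\: B2,
        forall i, Y i != set0 /\ Y i \subset B2 :\: B1,
        forall i j, i != j -> [disjoint X i & X j],
        forall i j, i != j -> [disjoint Y i & Y j] &
        forall Z : {set 'I_k},
          is_base M ((B1 :\: \bigcup_(i in Z) X i) :|: \bigcup_(i in Z) Y i)].

Definition weakly_base_orderable (E : finType) (M : matroid E) (alpha k : nat)
  : Prop :=
  forall B1 B2, is_base M B1 -> is_base M B2 ->
    alpha <= #|B1 :\: B2| -> k_exchange M k B1 B2.

(* Main.v *)
Require Import Defs.
From mathcomp Require Import all_boot all_order all_algebra.
Set Implicit Arguments. Unset Strict Implicit. Unset Printing Implicit Defensive.
Import GRing.Theory.
Local Open Scope ring_scope.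

Lemma sumU (T : finType) (G : zmodType) (f : T -> G) (A C : {set T}) :
  [disjoint A & C] ->
  \sum_(x in A :|: C) f x = \sum_(x in A) f x + \sum_(x in C) f x.
Proof.
move=> dAC; rewrite (big_setID A) setUK setDUl setDv set0U.
rewrite (setDidPl _) //; by rewrite disjoint_sym.
Qed.

Lemma sumD (T : finType) (G : zmodType) (f : T -> G) (A C : {set T}) :
  C \subset A ->
  \sum_(x in A :\: C) f x = \sum_(x in A) f x - \sum_(x in C) f x.
Proof.
move=> sCA; rewrite [X in _ = X - _](big_setID C) (setIidPr sCA).
by rewrite addrC addKr.
Qed.

Lemma sum_bigcup (I T : finType) (G : zmodType) (f : T -> G)
  (X : I -> {set T}) (Z : {set I}) :
  (forall i j, i != j -> [disjoint X i & X j]) ->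
  \sum_(x in \bigcup_(i in Z) X i) f x = \sum_(i in Z) \sum_(x in X i) f x.
Proof.
move=> dis; move: {2}#|Z| (erefl #|Z|) => n; elim: n Z => [|n IH] Z cZ.
  move/eqP: cZ; rewrite cards_eq0 => /eqP ZE.
  by rewrite ZE !big_set0.
have [i iZ] : exists i, i \in Z.
  by apply/set0Pn; rewrite -card_gt0 cZ.
rewrite -(setD1K iZ) bigcup_setU big_set1 sumU; last first.
  apply: bigcup_disjoint => j; rewrite !inE => /andP[ji _].
  by apply: dis; rewrite eq_sym.
rewrite big_setU1 ?inE ?eqxx //= IH //.
by move: cZ; rewrite (cardsD1 i) iZ add1n => -[].
Qed.

Lemma avoid_Z (G : zmodType) (F : seq G) (c : G) (d : 'I_(size F).+1 -> G) :
  c \notin F -> exists Z : {set 'I_(size F).+1},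
    Z != set0 /\ c + \sum_(i in Z) d i \notin F.
Proof.
move=> cF; set k := (size F).+1.
pose s (j : nat) := c + \sum_(i : 'I_k | (i < j)%N) d i.
have split_s : forall a b : nat, (a < b)%N ->
    s b = s a + \sum_(i : 'I_k | (a <= i < b)%N) d i.
  move=> a b ab; rewrite /s -addrA; congr (_ + _).
  rewrite (bigID (fun l : 'I_k => (l < a)%N)) /=; congr (_ + _).
    apply: eq_bigl => l; case: (ltnP l a) => h /=; last by rewrite andbF.
    by rewrite andbT (ltn_trans h ab).
  by apply: eq_bigl => l; case: (ltnP l a) => h /=; rewrite ?andbF ?andbT.
case: (boolP (all (fun j => s j \in F) (iota 1 k))) => [allF | ]; last first.
  case/allPn => j; rewrite mem_iota => /andP[j1 jk] sjF.
  exists [set i : 'I_k | (i < j)%N]; split.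
    by apply/set0Pn; exists ord0; rewrite inE.
  by rewrite (eq_bigl (fun i : 'I_k => (i < j)%N)) // => i; rewrite inE.
have : ~~ uniq [seq s j | j <- iota 1 k].
  apply/negP => U.
  have H : {subset [seq s j | j <- iota 1 k] <= F}.
    by move=> x /mapP [j jin ->]; exact: (allP allF j jin).
  by move: (uniq_leq_size U H); rewrite size_map size_iota /k ltnn.
case/(uniqPn c) => i [j [ij]]; rewrite size_map size_iota => jk.
rewrite !(nth_map 0%N) ?size_iota ?(ltn_trans ij) // !nth_iota ?(ltn_trans ij) //.
move=> e.
have ab : (1 + i < 1 + j)%N by rewrite ltn_add2l.
have ik : (1 + i < k)%N by rewrite add1n; exact: leq_ltn_trans ij jk.
exists [set l : 'I_k | ((1 + i) <= l < 1 + j)%N]; split.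
  by apply/set0Pn; exists (Ordinal ik); rewrite inE /= leqnn ab.
rewrite (eq_bigl (fun l : 'I_k => ((1 + i) <= l < 1 + j)%N)); last by move=> l; rewrite inE.
move: (split_s _ _ ab); rewrite -e => H.
have -> : \sum_(l : 'I_k | ((1 + i) <= l < 1 + j)%N) d l = 0.
  by apply: (@addrI _ (s (1 + i)%N)); rewrite addr0 -H.
by rewrite addr0.
Qed.

Lemma base_card (E : finType) (M : matroid E) n : forall B1 B2,
  is_base M B1 -> is_base M B2 -> (#|B1 :\: B2| <= n)%N -> #|B1| = #|B2|.
Proof.
have zero : forall B1 B2, is_base M B1 -> is_base M B2 -> B1 :\: B2 = set0 ->
    #|B1| = #|B2|.
  move=> B1 B2 b1 b2 e; suff -> : B1 = B2 by []; apply/eqP; rewrite eqEsubset -setD_eq0 e eqxx /=.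
  rewrite -setD_eq0; case: (boolP (B2 :\: B1 == set0)) => // /set0Pn [y yin].
  have [z zin _] := base_exchange b2 b1 yin.
  by rewrite e inE in zin.
elim: n => [|n IH] B1 B2 b1 b2 c.
  by apply: zero => //; apply/eqP; rewrite -cards_eq0 -leqn0.
case: (boolP (B1 :\: B2 == set0)) => [/eqP|/set0Pn [x xin]]; first by apply: zero.
have [y yin b1'] := base_exchange b1 b2 xin.
have xB1 : x \in B1 by move: xin; rewrite inE => /andP[].
have xB2 : x \notin B2 by move: xin; rewrite inE => /andP[].
have yB2 : y \in B2 by move: yin; rewrite inE => /andP[].
have yB1 : y \notin B1 by move: yin; rewrite inE => /andP[].
rewrite -(IH _ _ b1' b2).
  rewrite cardsU1 (cardsD1 x B1) xB1 !inE (negbTE yB1) andbF.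
  by [].
have : (y |: (B1 :\ x)) :\: B2 \proper B1 :\: B2.
  apply/properP; split.
    apply/subsetP => z; rewrite !inE => /andP[zB2 /orP[/eqP zy|/andP[_ zB1]]]; last by rewrite zB2 zB1.
    by rewrite zy yB2 in zB2.
  exists x => //; rewrite !inE eqxx /= orbF.
  by apply/negP => /andP[_ /eqP xy]; rewrite xy yB2 in xB2.
by move/proper_card => h; rewrite -ltnS; exact: leq_trans h c.
Qed.

Lemma main_ind (E : finType) (M : matroid E) (G : zmodType)
  (psi : E -> G) (F : seq G) (alpha : nat) (B : {set E}) :
  weakly_base_orderable M alpha (size F).+1 -> is_base M B ->
  forall n Bst, is_base M Bst -> F_avoiding psi F Bst -> (#|Bst :\: B| <= n)%N ->
  exists Bs, [/\ is_base M Bs, F_avoiding psi F Bs & (#|Bs :\: B| <= alpha - 1)%N].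
Proof.
move=> wbo bB; elim=> [|n IH] Bst bst av c.
  by exists Bst; split => //; apply: leq_trans c _.
case: (leqP #|Bst :\: B| (alpha - 1)) => hc; first by exists Bst.
have ha : (alpha <= #|Bst :\: B|)%N.
  by move: hc; case: (alpha) => [|a] //; rewrite subSS subn0.
have [X [Y [hX hY dX dY hB]]] := wbo _ _ bst bB ha.
pose d i := psi_sum psi (Y i) - psi_sum psi (X i).
have [Z [Zn avZ]] := avoid_Z d av.
set UX := \bigcup_(i in Z) X i.
set UY := \bigcup_(i in Z) Y i.
have inX x : x \in UX -> x \in Bst /\ x \notin B.
  case/bigcupP => i _ xi; have [_ /subsetP s] := hX i.
  by move: (s x xi); rewrite inE => /andP[-> ->].
have inY x : x \in UY -> x \in B /\ x \notin Bst.
  case/bigcupP => i _ xi; have [_ /subsetP s] := hY i.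
  by move: (s x xi); rewrite inE => /andP[-> ->].
set B' := (Bst :\: UX) :|: UY.
have bB' : is_base M B' := hB Z.
have avB' : F_avoiding psi F B'.
  rewrite /F_avoiding /psi_sum /B' sumU; last first.
    rewrite -setI_eq0; apply/eqP/setP => x; rewrite !inE.
    case: (boolP (x \in UY)) => hx; last by rewrite andbF.
    by have [_ hx'] := inY x hx; rewrite (negbTE hx') andbF.
  rewrite sumD; last by apply/subsetP => x /(inX x) [].
  rewrite /UX /UY !sum_bigcup //.
  move: avZ; rewrite /d sumrB /psi_sum.
  by rewrite addrA -[X in _ \notin _ -> X \notin _]addrA [X in _ \notin _ -> _ + X \notin _]addrC addrA.
apply: (IH B') => //.
have : B' :\: B \proper Bst :\: B.
  apply/properP; split.
    apply/subsetP => x; rewrite !inE => /andP[xB /orP[/andP[_ ->]|/(inY x) [xB' _]]].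
      by rewrite xB.
    by rewrite xB' in xB.
  have [i0 i0Z] := set0Pn _ Zn.
  have [xX0 _] := hX i0; have [x0 x0X] := set0Pn _ xX0.
  have x0U : x0 \in UX by apply/bigcupP; exists i0.
  have [x0B x0nB] := inX _ x0U.
  exists x0; first by rewrite inE x0B x0nB.
  rewrite !inE x0U (negbTE x0nB) /=.
  by apply/negP => /(inY x0) [x0B' _]; rewrite x0B' in x0nB.
by move/proper_card => h; rewrite -ltnS; exact: leq_trans h c.
Qed.

Local Close Scope ring_scope.

Theorem theorem5p10 (E : finType) (M : matroid E) (G : zmodType)
  (psi : E -> G) (F : seq G) (alpha : nat) :
  uniq F -> 0 < alpha ->
  weakly_base_orderable M alpha (size F).+1 ->
  (exists B, is_base M B /\ F_avoiding psi F B) ->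
  forall B, is_base M B ->
    exists Bs, [/\ is_base M Bs, F_avoiding psi F Bs & #|B :\: Bs| <= alpha - 1].
Proof.
move=> _ _ wbo [B0 [b0 av0]] B bB.
have [Bs [bs avs c]] := @main_ind E M G psi F alpha B wbo bB _ B0 b0 av0 (leqnn _).
exists Bs; split => //.
rewrite cardsD (@base_card E M _ B Bs bB bs (leqnn _)) setIC -cardsD.
exact: c.
Qed.
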